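(* Any Schur positive connected bipartite graph has a balanced stable bipartition, namely, the cardinalities of the two parts differ by $1$ or $0$.
   Context: A graph $G$ is Schur positive if its chromatic symmetric function $X_G=\sum_{\kappa}\prod_{v\in V(G)}x_{\kappa(v)}$ (sum over proper colorings $\kappa$) has nonnegative coefficients in the Schur basis. A stable bipartition of $G$ is a partition of $V(G)$ into two stable (independent) sets. *)

(* Defs.v *)
From HB Require Import structures.
From mathcomp Require Import all_boot all_order all_algebra.
From mathcomp Require Import mpoly.
Set Implicit Arguments. Unset Strict Implicit. Unset Printing Implicit Defensive.
Import Order.TTheory GRing.Theory Num.Theory.
Local Open Scope ring_scope.

Definition stable (V : finType) (e : rel V) (A : {set V}) : bool :=
  [forall x in A, forall y in A, ~~ e x y].

Definition stable_bipartition (V : finType) (e : rel V) (A : {set V}) : bool :=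
  stable e A && stable e (~: A).

Definition bipartite (V : finType) (e : rel V) : Prop :=
  exists A : {set V}, stable_bipartition e A.

Definition connected (V : finType) (e : rel V) : Prop :=
  forall x y : V, connect e x y.

Definition proper_col (V : finType) (e : rel V) (k : nat) (f : {ffun V -> 'I_k}) : bool :=
  [forall x, forall y, e x y ==> (f x != f y)].

(* chromatic symmetric function X_G restricted to k variables x_0..x_{k-1} *)
Definition chromX (V : finType) (e : rel V) (k : nat) : {mpoly int[k]} :=
  \sum_(f : {ffun V -> 'I_k} | proper_col e f) \prod_(v : V) 'X_(f v).

Definition is_partition (n : nat) (la : seq nat) : bool :=
  [&& sorted geq la, all (fun x => 0 < x)%N la & sumn la == n].

Definition in_shape (la : seq nat) (d : nat) (c : 'I_d * 'I_d) : bool :=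
  (c.2 < nth 0 la c.1)%N.

(* semistandard Young tableau of shape la with entries in 'I_k: cells of the
   diagram carry Some entry, all other grid positions carry None; rows weakly
   increase, columns strictly increase *)
Definition ssyt (la : seq nat) (k : nat)
    (T : {ffun 'I_(sumn la) * 'I_(sumn la) -> option 'I_k}) : bool :=
  [forall c, (T c != None) == in_shape la c] &&
  [forall i, forall j, forall j',
     [&& in_shape la (i, j), in_shape la (i, j') & (j < j')%N] ==>
     (if (T (i, j), T (i, j')) is (Some a, Some b) then (a <= b)%N else false)] &&
  [forall i, forall i', forall j,
     [&& in_shape la (i, j), in_shape la (i', j) & (i < i')%N] ==>
     (if (T (i, j), T (i', j)) is (Some a, Some b) then (a < b)%N else false)].

Definition schur (k : nat) (la : seq nat) : {mpoly int[k]} :=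
  \sum_(T : {ffun 'I_(sumn la) * 'I_(sumn la) -> option 'I_k} | @ssyt la k T)
     \prod_(c : 'I_(sumn la) * 'I_(sumn la))
        (if T c is Some a then 'X_a else 1).

(* X_G is homogeneous of degree n = #|V|, and the
   restriction Lambda^n -> Lambda_n^n to n variables is an isomorphism sending
   s_la to s_la(x_1..x_n); hence X_G is Schur positive iff its restriction to
   n variables is a nonnegative combination of the s_la(x_1..x_n), la |- n. *)
Definition schur_positive (V : finType) (e : rel V) : Prop :=
  exists (s : seq (seq nat)) (c : seq nat -> int),
    [/\ uniq s, all (is_partition #|V|) s,
        (forall la, la \in s -> 0 <= c la) &
        chromX e #|V| = \sum_(la <- s) c la *: schur #|V| la].

(* Main.v *)
Require Import Defs.
From mathcomp Require Import all_boot all_order all_algebra.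
From mathcomp Require Import mpoly.
From mathcomp Require Import zify.
Set Implicit Arguments. Unset Strict Implicit. Unset Printing Implicit Defensive.
Import Order.TTheory GRing.Theory Num.Theory.

Lemma sum_bool_card (I : finType) (P : pred I) :
  (\sum_(i : I) (P i : nat))%N = #|[set i | P i]|.
Proof.
rewrite cardsE -sum1_card [in RHS]big_mkcond /=; apply: eq_bigr => i _.
rewrite /in_mem /=; by case: (P i).
Qed.

Lemma prodX k (I : finType) (g : I -> 'X_{1..k}) :
  (\prod_(i : I) ('X_[g i] : {mpoly int[k]}) = 'X_[(\sum_(i : I) g i)%MM])%R.
Proof.
symmetry; apply: (big_morph (fun m => ('X_[m] : {mpoly int[k]}))).
  by move=> x y; rewrite mpolyXD.
by rewrite mpolyX0.
Qed.

Definition monf (V : finType) k (f : {ffun V -> 'I_k}) : 'X_{1..k} :=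
  (\sum_(v : V) U_(f v))%MM.

Lemma monfE (V : finType) k (f : {ffun V -> 'I_k}) j :
  monf f j = #|[set v | f v == j]|.
Proof.
rewrite /monf mnm_sumE -sum_bool_card; apply: eq_bigr => v _.
by rewrite mnm1E.
Qed.

Lemma mcoeff_chromX (V : finType) (e : rel V) k m :
  mcoeff m (chromX e k) = (\sum_(f : {ffun V -> 'I_k} | proper_col e f) ((monf f == m)%:R))%R.
Proof.
rewrite /chromX raddf_sum; apply: eq_bigr => f _.
by rewrite prodX /= mcoeffX.
Qed.

Definition monT k d (T : {ffun 'I_d * 'I_d -> option 'I_k}) : 'X_{1..k} :=
  (\sum_(c : 'I_d * 'I_d) (if T c is Some a then U_(a) else 0))%MM.

Lemma monTE k d (T : {ffun 'I_d * 'I_d -> option 'I_k}) j :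
  monT T j = #|[set c | T c == Some j]|.
Proof.
rewrite /monT mnm_sumE -sum_bool_card; apply: eq_bigr => c _.
by case: (T c) => [x|]; rewrite ?mnm1E ?mnm0E.
Qed.

Lemma mcoeff_schur k la m :
  mcoeff m (schur k la) =
  (\sum_(T : {ffun 'I_(sumn la) * 'I_(sumn la) -> option 'I_k} | ssyt T) ((monT T == m)%:R))%R.
Proof.
rewrite /schur raddf_sum; apply: eq_bigr => T _.
rewrite (eq_bigr (fun c => 'X_[if T c is Some a then U_(a) else 0%MM])).
  by rewrite prodX /= mcoeffX.
by move=> c _; case: (T c) => // ; rewrite mpolyX0.
Qed.
Lemma stableP (V : finType) (e : rel V) (A : {set V}) x y :
  stable e A -> x \in A -> y \in A -> ~~ e x y.
Proof. by move=> /forall_inP H xA yA; move/forall_inP: (H x xA); apply. Qed.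

Lemma stable_intro (V : finType) (e : rel V) (A : {set V}) :
  (forall x y, x \in A -> y \in A -> ~~ e x y) -> stable e A.
Proof. by move=> H; apply/forall_inP => x xA; apply/forall_inP => y yA; apply: H. Qed.

Lemma sbip_edge (V : finType) (e : rel V) (A : {set V}) x y :
  stable_bipartition e A -> e x y -> (x \in A) = (y \notin A).
Proof.
case/andP=> sA sC exy.
case xA: (x \in A); case yA: (y \in A) => //=.
  by move: (stableP sA xA yA); rewrite exy.
have xC : x \in ~: A by rewrite inE xA.
have yC : y \in ~: A by rewrite inE yA.
by move: (stableP sC xC yC); rewrite exy.
Qed.

Lemma sbip_unique (V : finType) (e : rel V) (A B : {set V}) :
  stable_bipartition e A -> stable_bipartition e B -> connected e ->
  B = A \/ B = ~: A.
Proof.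
move=> sA sB con.
pose P v := (v \in A) == (v \in B).
have edge : forall x y, e x y -> P x = P y.
  move=> x y exy; rewrite /P (sbip_edge sA exy) (sbip_edge sB exy).
  by case: (y \in A); case: (y \in B).
have conP : forall x y, connect e x y -> P x = P y.
  move=> x y /connectP [p pth ->]; elim: p x pth => [|z p IH] x //=.
  by case/andP=> exz pz; rewrite (edge _ _ exz) IH.
case: (pickP (fun _ : V => true)) => [x0 _|none]; last first.
  by left; apply/setP => v; move: (none v).
case Px0: (P x0).
  left; apply/setP => v; have := conP _ _ (con x0 v); rewrite Px0 /P => /esym/eqP.
  by move=> ->.
right; apply/setP => v; have := conP _ _ (con x0 v); rewrite Px0 /P inE.
by case: (v \in A); case: (v \in B).
Qed.
Lemma tableau_move k (la : seq nat) (i0 i1 : 'I_k) a b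
  (T : {ffun 'I_(sumn la) * 'I_(sumn la) -> option 'I_k}) :
  sorted geq la -> (i0 < i1)%N -> (b.+2 <= a)%N -> ssyt T ->
  (forall x, #|[set c | T c == Some x]| = if x == i0 then a else if x == i1 then b else 0%N) ->
  exists T' : {ffun 'I_(sumn la) * 'I_(sumn la) -> option 'I_k}, ssyt T' /\
   forall x, #|[set c | T' c == Some x]| = if x == i0 then a.-1 else if x == i1 then b.+1 else 0%N.
Proof.
set d := sumn la.
move=> srt lt01 ab /andP[/andP[Hs Hr] Hc] Hcnt.
have Hs' := forallP Hs.
have shapeE : forall c, (T c != None) = in_shape la c.
  by move=> c; move/forallP: Hs => Hs; exact: (eqP (Hs c)).
have rowP : forall (i j j' : 'I_d), in_shape la (i, j) -> in_shape la (i, j') -> (j < j')%N ->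
   (if (T (i, j), T (i, j')) is (Some a, Some b) then (a <= b)%N else false).
  move=> i j j' h1 h2 h3.
  by move/forallP: Hr => /(_ i) /forallP /(_ j) /forallP /(_ j') /implyP; apply; rewrite h1 h2 h3.
have colP : forall (i i' j : 'I_d), in_shape la (i, j) -> in_shape la (i', j) -> (i < i')%N ->
   (if (T (i, j), T (i', j)) is (Some a, Some b) then (a < b)%N else false).
  move=> i i' j h1 h2 h3.
  by move/forallP: Hc => /(_ i) /forallP /(_ i') /forallP /(_ j) /implyP; apply; rewrite h1 h2 h3.
have i01 : i0 != i1 by apply/eqP => E; move: lt01; rewrite E ltnn.
have vals : forall c x, T c = Some x -> x = i0 \/ x = i1.
  move=> c x Tc; case: (eqVneq x i0) => [->|n0]; first by left.
  case: (eqVneq x i1) => [->|n1]; first by right.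
  move: (Hcnt x); rewrite (negbTE n0) (negbTE n1) => /eqP; rewrite cards_eq0 => /eqP Z.
  have : c \in [set c | T c == Some x] by rewrite inE Tc.
  by rewrite Z inE.
have vge : forall c x, T c = Some x -> (i0 <= x)%N.
  by move=> c x /vals [->|->] //; apply: ltnW.
have vle : forall c x, T c = Some x -> (x <= i1)%N.
  by move=> c x /vals [->|->] //; apply: ltnW.
have someT : forall c, in_shape la c -> exists x, T c = Some x.
  by move=> c; rewrite -shapeE; case: (T c) => // x _; exists x.
have mono : forall (i j r : 'I_d), in_shape la (i, j) -> (r <= i)%N -> in_shape la (r, j).
  move=> i j r; rewrite /in_shape /=.
  case: (ltnP i (size la)) => hi; last by rewrite nth_default.
  move=> hj ri; apply: (leq_trans hj).
  have gtr : transitive geq by move=> x y z h1 h2; apply: leq_trans h2 h1.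
  apply: (sorted_leq_nth gtr (fun x => leqnn x) 0 srt) => //.
    by rewrite inE (leq_ltn_trans ri hi).
set Z := [set c | T c == Some i0].
have cZ : #|Z| = a by rewrite /Z Hcnt eqxx.
have [c0 c0Z] : exists c0, c0 \in Z.
  by apply/card_gt0P; rewrite cZ; apply: leq_ltn_trans ab.
have d0 : (0 < d)%N by apply: (leq_ltn_trans (leq0n _) (ltn_ord c0.1)).
pose r0 : 'I_d := Ordinal d0.
have Zrow : forall c, c \in Z -> c.1 = r0.
  case=> i j; rewrite inE => /eqP Tc /=; apply: val_inj => /=.
  case: (posnP i) => // ip.
  have sh : in_shape la (i, j) by rewrite -shapeE Tc.
  have sh0 : in_shape la (r0, j) by apply: (mono i) => //.
  have [x Tx] := someT _ sh0.
  move: (colP r0 i j sh0 sh ip); rewrite Tx Tc /=.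
  by move: (vge _ _ Tx); rewrite ltnNge => ->.
case: (@arg_maxnP _ c0 (fun c => c \in Z) (fun c => nat_of_ord c.2) c0Z) => cs csZ csmax.
set js := cs.2.
have csE : cs = (r0, js) by rewrite /js -(Zrow cs csZ); case: cs {csZ csmax js}.
have Tcs : T cs = Some i0 by move: csZ; rewrite inE => /eqP.
have claimA : (a <= js.+1)%N.
  rewrite -cZ.
  have sub : Z \subset [set (r0, widen_ord (ltn_ord js) k) | k : 'I_js.+1].
    apply/subsetP => c cZ'; apply/imsetP.
    have hc : (c.2 < js.+1)%N by rewrite ltnS; apply: csmax.
    exists (Ordinal hc) => //.
    by rewrite -(Zrow c cZ'); case: c {cZ'} hc => i j hc /=; congr pair; apply: val_inj.
  apply: (leq_trans (subset_leq_card sub)).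
  by apply: (leq_trans (leq_imset_card _ _)); rewrite card_ord.

have claimB : forall i : 'I_d, (0 < i)%N -> ~~ in_shape la (i, js).
  move=> i ip; apply/negP => sh.
  set W := [set (i, widen_ord (ltn_ord js) k) | k : 'I_js.+1].
  have cW : #|W| = js.+1.
    rewrite card_imset ?card_ord //.
    by move=> k1 k2 [] E; apply: val_inj.
  have sub : W \subset [set c | T c == Some i1].
    apply/subsetP => c /imsetP [kk _ ->]; rewrite inE.
    set j := widen_ord (ltn_ord js) kk.
    have jle : (j <= js)%N by rewrite /j /= -ltnS.
    have shj : in_shape la (i, j) by move: sh; rewrite /in_shape /=; apply: leq_ltn_trans.
    have sh0 : in_shape la (r0, j) by apply: (mono i) => //.
    have [x Tx] := someT _ sh0.
    have [y Ty] := someT _ shj.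
    have xle : (x <= i0)%N.
      move: jle; rewrite leq_eqVlt => /orP [/eqP jE|jlt].
        have : (r0, j) = cs by rewrite csE; congr pair; apply: val_inj.
        by move=> E; move: Tx; rewrite E Tcs => -[->].
      have shs : in_shape la (r0, js) by rewrite -csE -shapeE Tcs.
      by move: (rowP r0 j js sh0 shs jlt); rewrite Tx -csE Tcs.
    move: (colP r0 i j sh0 shj ip); rewrite Tx Ty /= => xy.
    case: (vals _ _ Ty) => yE; last by rewrite yE.
    by move: (vge _ _ Tx); rewrite leqNgt (leq_trans xy) // yE.
  move: (subset_leq_card sub); rewrite cW Hcnt eq_sym (negbTE i01) eqxx => hb.
  move: claimA ab hb; lia.
pose T' : {ffun 'I_d * 'I_d -> option 'I_k} := [ffun c => if c == cs then Some i1 else T c].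
exists T'; split; last first.
  move=> x.
  case: (eqVneq x i0) => [->|n0].
    have -> : [set c | T' c == Some i0] = Z :\ cs.
      apply/setP => c; rewrite !inE ffunE.
      case: (eqVneq c cs) => [->|nc] //=.
      by apply/eqP => -[] /eqP; rewrite eq_sym (negbTE i01).
    by move: (cardsD1 cs Z); rewrite csZ cZ => ->.
  case: (eqVneq x i1) => [->|n1].
    have -> : [set c | T' c == Some i1] = cs |: [set c | T c == Some i1].
      apply/setP => c; rewrite !inE ffunE.
      by case: (eqVneq c cs) => [->|nc] //=; rewrite eqxx.
    rewrite cardsU1 Hcnt eq_sym (negbTE i01) eqxx inE Tcs.
    have -> : (Some i0 == Some i1) = false by apply/eqP => -[] /eqP; rewrite (negbTE i01).
    by [].
  have := Hcnt x; rewrite (negbTE n0) (negbTE n1) => <-.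
  rewrite (_ : [set c | T' c == Some x] = [set c | T c == Some x]) //; apply/setP => c; rewrite !inE ffunE.
  case: (eqVneq c cs) => [->|nc] //=; rewrite Tcs.
  have -> : (Some i1 == Some x) = false by apply/eqP => -[] E; move: n1; rewrite E eqxx.
  by apply/esym/eqP => -[] E; move: n0; rewrite E eqxx.
have T'E : forall c, T' c = if c == cs then Some i1 else T c by move=> c; rewrite ffunE.
apply/andP; split; first apply/andP; first split.
- apply/forallP => c; rewrite T'E; case: (eqVneq c cs) => [->|_]; last by rewrite (eqP (Hs' c)).
  by rewrite -shapeE Tcs.
- apply/forallP => i; apply/forallP => j; apply/forallP => j'; apply/implyP => /and3P [s1 s2 jj].
  rewrite !T'E.
  case: (eqVneq (i, j) cs) => [E1|N1]; case: (eqVneq (i, j') cs) => [E2|N2].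
  + by move: E2; rewrite -E1 => -[E]; move: jj; rewrite E ltnn.
  + have [y Ty] := someT _ s2; rewrite Ty /=.
    case: (vals _ _ Ty) => yE; last by rewrite yE.
    have : (i, j') \in Z by rewrite inE Ty yE.
    move/csmax => /=; rewrite /js -E1 /= => h; move: (leq_ltn_trans h jj); by rewrite ltnn.
  + have [x Tx] := someT _ s1; rewrite Tx /=.
    exact: (vle _ _ Tx).
  + exact: rowP.
- apply/forallP => i; apply/forallP => i'; apply/forallP => j; apply/implyP => /and3P [s1 s2 ii].
  rewrite !T'E.
  case: (eqVneq (i, j) cs) => [E1|N1]; case: (eqVneq (i', j) cs) => [E2|N2].
  + by move: E2; rewrite -E1 => -[E]; move: ii; rewrite E ltnn.
  + move: E1; rewrite csE => -[iE jE].
    have : (0 < i')%N by move: ii; rewrite iE.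
    by move/claimB; rewrite -jE s2.
  + move: E2; rewrite csE => -[iE jE].
    by move: ii; rewrite iE.
  + exact: colP.
Qed.

Lemma core (V : finType) (e : rel V) (A : {set V}) :
  stable_bipartition e A -> connected e -> schur_positive e ->
  (#|~: A|.+2 <= #|A|)%N -> False.
Proof.
move=> sA con [s [c [us alls cpos Heq]]] ab.
have nE : #|V| = (#|A| + #|~: A|)%N by rewrite cardsC.
have h0 : (0 < #|V|)%N by rewrite nE; lia.
have h1 : (1 < #|V|)%N by rewrite nE; lia.
pose i0 : 'I_#|V| := Ordinal h0.
pose i1 : 'I_#|V| := Ordinal h1.
have i01 : i0 != i1 by [].
pose m0 : 'X_{1..#|V|} := [multinom (if i == i0 then #|A| else if i == i1 then #|~: A| else 0)%N | i < #|V|].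
pose m1 : 'X_{1..#|V|} := [multinom (if i == i0 then #|A|.-1 else if i == i1 then #|~: A|.+1 else 0)%N | i < #|V|].
have coefE : forall m, mcoeff m (chromX e #|V|) = (\sum_(la <- s) c la * mcoeff m (schur #|V| la))%R.
  by move=> m; rewrite Heq raddf_sum; apply: eq_bigr => la _; rewrite /= mcoeffZ.
pose f0 : {ffun V -> 'I_#|V|} := [ffun v => if v \in A then i0 else i1].
have pf0 : proper_col e f0.
  apply/forallP => x; apply/forallP => y; apply/implyP => exy; rewrite !ffunE.
  move: (sbip_edge sA exy) => ->; by case: (y \in A).
have mf0 : monf f0 = m0.
  apply/mnmP => j; rewrite monfE mnmE.
  case: (eqVneq j i0) => [->|n0].
    by apply: eq_card => v; rewrite !inE ffunE; case: (v \in A).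
  case: (eqVneq j i1) => [->|n1].
    by apply: eq_card => v; rewrite !inE ffunE; case: (v \in A).
  apply/eqP; rewrite cards_eq0; apply/eqP/setP => v; rewrite !inE ffunE.
  by case: (v \in A); rewrite eq_sym ?(negbTE n0) ?(negbTE n1).
have step1 : (0 < mcoeff m0 (chromX e #|V|))%R.
  rewrite mcoeff_chromX (bigD1 f0) //= mf0 eqxx.
  apply: ltr_pwDl => //; apply: sumr_ge0 => f _; apply: ler0n.
have step2 : mcoeff m1 (chromX e #|V|) = 0%R.
  rewrite mcoeff_chromX big1 // => f pf; case: eqP => // mf; exfalso.
  have cnt : forall j, #|[set v | f v == j]| = m1 j by move=> j; rewrite -monfE mf.
  have all01 : forall v, f v = i0 \/ f v = i1.
    move=> v; case: (eqVneq (f v) i0) => [->|n0]; first by left.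
    case: (eqVneq (f v) i1) => [->|n1]; first by right.
    move: (cnt (f v)); rewrite mnmE (negbTE n0) (negbTE n1) => /eqP; rewrite cards_eq0 => /eqP Z.
    have : v \in [set w | f w == f v] by rewrite inE.
    by rewrite Z inE.
  pose B := [set v | f v == i0].
  have prop : forall x y, e x y -> f x != f y.
    by move=> x y exy; move/forallP: pf => /(_ x) /forallP /(_ y) /implyP; apply.
  have sB : stable_bipartition e B.
    apply/andP; split; apply: stable_intro => x y; rewrite !inE.
      move=> /eqP fx /eqP fy; apply/negP => exy; move: (prop _ _ exy); by rewrite fx fy eqxx.
    have F : forall z, ~~ (f z == i0) -> f z = i1 by move=> z; case: (all01 z) => ->; rewrite ?eqxx.
    move=> /F fx /F fy; apply/negP => exy; move: (prop _ _ exy); by rewrite fx fy eqxx.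
  have cB : #|B| = #|A|.-1 by rewrite /B cnt mnmE eqxx.
  case: (sbip_unique sA sB con) => BE; move: cB; rewrite BE; lia.
case: (boolP (has (fun la => c la * mcoeff m0 (schur #|V| la) != 0)%R s)); last first.
  move=> /hasPn H; move: step1; rewrite coefE big1_seq //.
  by move=> la /andP [_ /H]; rewrite negbK => /eqP.
move=> /hasP [la las nz].
have cla : (0 < c la)%R.
  rewrite lt_def cpos // andbT; apply/eqP => E; move: nz; by rewrite E mul0r eqxx.
have [T [sT mT]] : exists T : {ffun 'I_(sumn la) * 'I_(sumn la) -> option 'I_#|V|}, ssyt T /\ monT T = m0.
  move: nz; rewrite mcoeff_schur.
  case: (boolP [exists T : {ffun 'I_(sumn la) * 'I_(sumn la) -> option 'I_#|V|}, ssyt T && (monT T == m0)]).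
    by move=> /existsP [T /andP [sT /eqP mT]] _; exists T.
  move=> /existsPn H; rewrite big1 ?mulr0 ?eqxx //.
  by move=> T sT; move: (H T); rewrite sT /= => /negbTE ->.
have srt : sorted geq la by move/allP: alls => /(_ la las) /and3P [].
have [T' [sT' cT']] := @tableau_move #|V| la i0 i1 #|A| #|~: A| T srt (isT : (i0 < i1)%N) ab sT
  (fun x => etrans (esym (monTE T x)) ltac:(by rewrite mT mnmE)).
have mT' : monT T' = m1 by apply/mnmP => j; rewrite monTE cT' mnmE.
have pos1 : (0 < mcoeff m1 (schur #|V| la))%R.
  rewrite mcoeff_schur (bigD1 T') //= mT' eqxx.
  apply: ltr_pwDl => //; apply: sumr_ge0 => f _; apply: ler0n.
move: step2; rewrite coefE (bigD1_seq la) //= => E.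
have : (0 < c la * mcoeff m1 (schur #|V| la) + \sum_(i <- s | i != la) c i * mcoeff m1 (schur #|V| i))%R.
  apply: ltr_pwDl; first by apply: mulr_gt0.
  rewrite big_seq_cond; apply: sumr_ge0 => i /andP [iis _]; apply: mulr_ge0; first by apply: cpos.
  by rewrite mcoeff_schur; apply: sumr_ge0 => TT _; apply: ler0n.
by rewrite E ltxx.
Qed.

Unset Implicit Arguments.
Set Strict Implicit.

Theorem theorem3p3 (V : finType) (e : rel V)
  (e_sym : ssrbool.symmetric e) (e_irr : irreflexive e)
  (G_conn : connected e) (G_bip : bipartite e) (G_sp : schur_positive e) :
  exists A : {set V},
    [&& stable_bipartition e A, (#|A| <= #|~: A|.+1)%N & (#|~: A| <= #|A|.+1)%N].
Proof.
case: G_bip => A sA.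
case: (leqP #|A| #|~: A|.+1) => h1.
  case: (leqP #|~: A| #|A|.+1) => h2.
    by exists A; rewrite sA h1 h2.
  exfalso; apply: (@core V e (~: A)) => //.
    by move: sA; rewrite /stable_bipartition setCK andbC.
  by rewrite setCK.
exfalso; exact: (core sA G_conn G_sp h1).
Qed.
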